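(* Let $\lambda=\lambda_0\lambda_1\lambda_2\cdots$ be Levin's number, regarded as the real number with binary expansion $0.\lambda_0\lambda_1\lambda_2\ldots$, and let $x_n=\{2^n\lambda\}$ for $n\ge1$. For every $d\ge 1$, with $e=2^d$ and $N=2^{e+d+1}$, the pair correlation function of $(x_n)_{n\ge1}$ satisfies $$F_N(2)\ \ge\ \frac{(e-d+1)(e-d)}{8e}.$$ In particular $F_N(2)\to\infty$ along $N=2^{2^d+d+1}$ as $d\to\infty$, so $(\{2^n\lambda\})_{n\ge1}$ does not have Poissonian pair correlations.
   Context: Over $\mathbb{F}_2$, $M_0=(1)$ and $M_{d+1}=\begin{pmatrix} M_d & M_d\\ 0 & M_d\end{pmatrix}$, so $M_d$ is $e\times e$ with $e=2^d$. $w_0,\dots,w_{2^e-1}$ are all vectors of $\mathbb{F}_2^e$ in increasing lexicographic order. Binary words and vectors are identified. $\lambda_d=(M_dw_0)(M_dw_1)\cdots(M_dw_{2^e-1})$ and Levin's number is $\lambda=\lambda_0\lambda_1\lambda_2\cdots$. For real $x$, $\{x\}=x-\lfloor x\rfloor$ and $\Vert x\Vert$ is the distance to the nearest integer. $F_N(s)=\frac1N\#\{(i,j):1\le i\ne j\le N,\ \Vert x_i-x_j\Vert<s/N\}$; a sequence has Poissonian pair correlations if $\lim_{N\to\infty}F_N(s)=2s$ for every $s\ge0$. *)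

(* Defs.v *)
From Stdlib Require Import Reals Lra Lia Arith List.
Import ListNotations.
Open Scope R_scope.

(* Entry (i,j) (0-indexed) of M_d over F_2 (true = 1):
   M_0 = (1),  M_{d+1} = [[M_d, M_d],[0, M_d]]. *)
Fixpoint Mentry (d i j : nat) : bool :=
  match d with
  | O => true
  | S d' =>
      let e := (2 ^ d')%nat in
      if (i <? e)%nat then
        (if (j <? e)%nat then Mentry d' i j else Mentry d' i (j - e))
      else
        (if (j <? e)%nat then false else Mentry d' (i - e) (j - e))
  end.

(* Component t (0-indexed) of w_k in F_2^e, where w_0,...,w_{2^e-1} list
   F_2^e in increasing lexicographic order: w_k is the e-bit binary
   representation of k, most significant bit first. *)
Definition wbit (e k t : nat) : bool := Nat.testbit k (e - 1 - t).

Definition Mw (d k i : nat) : bool :=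
  let e := (2 ^ d)%nat in
  fold_left xorb (map (fun j => andb (Mentry d i j) (wbit e k j)) (seq 0 e)) false.

(* The word lambda_d = (M_d w_0)(M_d w_1)...(M_d w_{2^e - 1}). *)
Definition lam_block (d : nat) : list bool :=
  let e := (2 ^ d)%nat in
  flat_map (fun k => map (fun i => Mw d k i) (seq 0 e)) (seq 0 (2 ^ e)).

(* n-th binary digit (0-indexed) of Levin's number lambda_0 lambda_1 ...
   (each block is nonempty, so the first n+1 blocks contain position n). *)
Definition levin_digit (n : nat) : bool :=
  nth n (flat_map lam_block (seq 0 (S n))) false.

Definition levin_term (n : nat) : R :=
  (if levin_digit n then 1 else 0) / 2 ^ (S n).

Definition fracR (x : R) : R := frac_part x.
Definition dist_int (x : R) : R := Rmin (fracR x) (1 - fracR x).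

Definition pair_count (x : nat -> R) (N : nat) (s : R) : nat :=
  length (filter (fun p : nat * nat =>
            let (i, j) := p in
            andb (negb (Nat.eqb i j))
                 (if Rlt_dec (dist_int (x i - x j)) (s / INR N) then true else false))
          (list_prod (seq 1 N) (seq 1 N))).

Definition F_pc (x : nat -> R) (N : nat) (s : R) : R :=
  / INR N * INR (pair_count x N s).

Definition poissonian_pc (x : nat -> R) : Prop :=
  forall s : R, 0 <= s -> Un_cv (fun N => F_pc x N s) (2 * s).

(* Main.v *)
Require Import Defs.
From Stdlib Require Import Reals Lra Lia Arith List.
Open Scope R_scope.

Module Part1.
Import ListNotations.
Local Open Scope nat_scope.
Local Open Scope bool_scope.

Definition xs (n : nat) (f : nat -> bool) : bool :=
  fold_left xorb (map f (seq 0 n)) false.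

Lemma fold_xor_acc : forall l a, fold_left xorb l a = xorb a (fold_left xorb l false).
Proof.
  induction l as [|x l IH]; intros a; simpl.
  - destruct a; reflexivity.
  - rewrite IH. rewrite (IH (xorb false x)) || rewrite (IH x). destruct a, x, (fold_left xorb l false); reflexivity.
Qed.

Lemma xs_S : forall n f, xs (S n) f = xorb (xs n f) (f n).
Proof.
  intros n f. unfold xs. rewrite seq_S, map_app, fold_left_app. simpl. reflexivity.
Qed.

Lemma xs_0 : forall f, xs 0 f = false.
Proof. reflexivity. Qed.

Lemma xs_ext : forall n f g, (forall j, j < n -> f j = g j) -> xs n f = xs n g.
Proof.
  induction n; intros f g H. reflexivity.
  rewrite !xs_S. rewrite (IHn f g) by (intros; apply H; lia). rewrite H by lia. reflexivity.
Qed.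

Lemma xs_add : forall a b f, xs (a + b) f = xorb (xs a f) (xs b (fun j => f (a + j))).
Proof.
  intros a b f. induction b.
  - rewrite Nat.add_0_r, xs_0. destruct (xs a f); reflexivity.
  - rewrite Nat.add_succ_r, !xs_S, IHb. rewrite Bool.xorb_assoc. reflexivity.
Qed.

Lemma xs_xor : forall n f g, xs n (fun j => xorb (f j) (g j)) = xorb (xs n f) (xs n g).
Proof.
  induction n; intros f g. reflexivity.
  rewrite !xs_S, IHn. destruct (xs n f), (xs n g), (f n), (g n); reflexivity.
Qed.

Lemma xs_false : forall n, xs n (fun _ => false) = false.
Proof. induction n. reflexivity. rewrite xs_S, IHn. reflexivity. Qed.

Lemma xs_andl : forall n b f, xs n (fun j => b && f j) = b && xs n f.
Proof.
  induction n; intros b f. destruct b; reflexivity.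
  rewrite !xs_S, IHn. destruct b, (xs n f), (f n); reflexivity.
Qed.

Lemma xs_andr : forall n b f, xs n (fun j => f j && b) = xs n f && b.
Proof.
  intros. rewrite (xs_ext n _ (fun j => b && f j)) by (intros; apply Bool.andb_comm).
  rewrite xs_andl. apply Bool.andb_comm.
Qed.

Lemma xs_swap : forall n m g, xs n (fun i => xs m (fun j => g i j)) = xs m (fun j => xs n (fun i => g i j)).
Proof.
  induction n; intros m g.
  - rewrite xs_0. symmetry. apply xs_false.
  - rewrite xs_S, IHn. rewrite <- xs_xor. apply xs_ext. intros j _. rewrite xs_S. reflexivity.
Qed.

Lemma xs_delta : forall n k f, k < n -> xs n (fun j => (k =? j) && f j) = f k.
Proof.
  induction n; intros k f Hk. lia.
  rewrite xs_S. destruct (Nat.eq_dec k n) as [->|Hne].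
  - rewrite (xs_ext n _ (fun _ => false)).
    + rewrite xs_false, Nat.eqb_refl. destruct (f n); reflexivity.
    + intros j Hj. destruct (Nat.eqb_spec n j); [lia|reflexivity].
  - rewrite IHn by lia. destruct (Nat.eqb_spec k n); [lia|]. destruct (f k); reflexivity.
Qed.

Lemma xs_rot : forall e r g, 0 < e -> xs e (fun i => g ((i + r) mod e)) = xs e g.
Proof.
  intros e r g He.
  assert (Hr : r mod e < e) by (apply Nat.mod_upper_bound; lia).
  set (r' := r mod e) in *.
  rewrite (xs_ext e _ (fun i => g ((i + r') mod e))).
  2:{ intros i _. f_equal. unfold r'. rewrite Nat.Div0.add_mod_idemp_r. reflexivity. }
  replace e with ((e - r') + r') at 1 by lia.
  rewrite xs_add.
  rewrite (xs_ext (e - r') _ (fun i => g (r' + i))).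
  2:{ intros i Hi. f_equal. rewrite Nat.mod_small by lia. lia. }
  rewrite (xs_ext r' _ g).
  2:{ intros j Hj. f_equal. replace (e - r' + j + r') with (j + 1 * e) by lia.
      rewrite Nat.Div0.mod_add. apply Nat.mod_small. lia. }
  assert (xs e g = xs (r' + (e - r')) g) as -> by (f_equal; lia).
  rewrite xs_add. apply Bool.xorb_comm.
Qed.

Definition Mv (d : nat) (f : nat -> bool) (i : nat) : bool :=
  xs (2 ^ d) (fun j => Mentry d i j && f j).

Lemma Mw_Mv : forall d k i, Mw d k i = Mv d (wbit (2 ^ d) k) i.
Proof. reflexivity. Qed.

Lemma Mentry_0 : forall d j, Mentry d 0 j = true.
Proof.
  induction d; intros j. reflexivity.
  cbn [Mentry]. assert (0 < 2 ^ d) by (apply Nat.neq_0_lt_0, Nat.pow_nonzero; lia).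
  destruct (Nat.ltb_spec 0 (2^d)); [|lia].
  destruct (j <? 2^d); apply IHd.
Qed.

Lemma Mentry_S : forall d i j, Mentry (S d) i j =
  if i <? 2 ^ d then (if j <? 2 ^ d then Mentry d i j else Mentry d i (j - 2 ^ d))
  else (if j <? 2 ^ d then false else Mentry d (i - 2 ^ d) (j - 2 ^ d)).
Proof. reflexivity. Qed.

Lemma Mentry_sq : forall d i k, i < 2 ^ d -> k < 2 ^ d ->
  xs (2 ^ d) (fun j => Mentry d i j && Mentry d j k) = (i =? k).
Proof.
  induction d; intros i k Hi Hk.
  - simpl in *. assert (i = 0) by lia. assert (k = 0) by lia. subst. reflexivity.
  - assert (He : 2 ^ S d = 2 ^ d + 2 ^ d) by (simpl; lia).
    rewrite He in *. rewrite xs_add.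
    set (e := 2 ^ d) in *.
    assert (E1 : forall j, j < e -> Mentry (S d) i j = if i <? e then Mentry d i j else false).
    { intros j Hj. rewrite Mentry_S. fold e. destruct (Nat.ltb_spec j e); [|lia].
      reflexivity. }
    assert (E2 : forall j, j < e -> Mentry (S d) j k = if k <? e then Mentry d j k else Mentry d j (k - e)).
    { intros j Hj. rewrite Mentry_S. fold e. destruct (Nat.ltb_spec j e); [|lia]. reflexivity. }
    assert (E3 : forall j, j < e -> Mentry (S d) i (e + j) = if i <? e then Mentry d i j else Mentry d (i - e) j).
    { intros j Hj. rewrite Mentry_S. fold e. destruct (Nat.ltb_spec (e + j) e); [lia|].
      replace (e + j - e) with j by lia. reflexivity. }
    assert (E4 : forall j, j < e -> Mentry (S d) (e + j) k = if k <? e then false else Mentry d j (k - e)).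
    { intros j Hj. rewrite Mentry_S. fold e. destruct (Nat.ltb_spec (e + j) e); [lia|].
      replace (e + j - e) with j by lia. reflexivity. }
    rewrite (xs_ext e (fun j => Mentry (S d) i j && Mentry (S d) j k)
       (fun j => (if i <? e then Mentry d i j else false) && (if k <? e then Mentry d j k else Mentry d j (k - e))))
      by (intros j Hj; rewrite E1, E2 by lia; reflexivity).
    rewrite (xs_ext e (fun j => Mentry (S d) i (e + j) && Mentry (S d) (e + j) k)
       (fun j => (if i <? e then Mentry d i j else Mentry d (i - e) j) && (if k <? e then false else Mentry d j (k - e))))
      by (intros j Hj; rewrite E3, E4 by lia; reflexivity).
    destruct (Nat.ltb_spec i e), (Nat.ltb_spec k e).
    + rewrite IHd by lia. rewrite (xs_ext e _ (fun _ => false)) by (intros; apply Bool.andb_false_r).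
      rewrite xs_false. destruct (i =? k); reflexivity.
    + rewrite Bool.xorb_nilpotent. symmetry. apply Nat.eqb_neq. lia.
    + rewrite (xs_ext e (fun j => false && _) (fun _ => false)) by reflexivity.
      rewrite (xs_ext e (fun j => Mentry d (i - e) j && false) (fun _ => false)) by (intros; apply Bool.andb_false_r).
      rewrite xs_false. symmetry. apply Nat.eqb_neq. lia.
    + rewrite (xs_ext e (fun j => false && _) (fun _ => false)) by reflexivity.
      rewrite xs_false, IHd by lia. simpl.
      destruct (Nat.eqb_spec (i - e) (k - e)), (Nat.eqb_spec i k); auto; lia.
Qed.

Lemma Mv_inv : forall d f i, i < 2 ^ d -> Mv d (Mv d f) i = f i.
Proof.
  intros d f i Hi. unfold Mv.
  rewrite (xs_ext _ _ (fun j => xs (2^d) (fun k => Mentry d i j && Mentry d j k && f k))).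
  2:{ intros j _. rewrite <- xs_andl. apply xs_ext. intros. apply Bool.andb_assoc. }
  rewrite xs_swap.
  rewrite (xs_ext _ _ (fun k => (i =? k) && f k)).
  2:{ intros k Hk. rewrite xs_andr. rewrite Mentry_sq by assumption. reflexivity. }
  apply xs_delta. assumption.
Qed.

Lemma Mv_ext : forall d f g i, (forall j, j < 2 ^ d -> f j = g j) -> Mv d f i = Mv d g i.
Proof. intros. unfold Mv. apply xs_ext. intros j Hj. rewrite H by assumption. reflexivity. Qed.

End Part1.
Import Part1.

Module Part2.
Import ListNotations.
Local Open Scope nat_scope.
Local Open Scope bool_scope.

Fixpoint num (n : nat) (f : nat -> bool) : nat :=
  match n with
  | O => 0
  | S n' => 2 * num n' f + (if f n' then 1 else 0)
  end.

Lemma num_ext : forall n f g, (forall j, j < n -> f j = g j) -> num n f = num n g.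
Proof.
  induction n; intros f g H; simpl. reflexivity.
  rewrite (IHn f g) by (intros; apply H; lia). rewrite H by lia. reflexivity.
Qed.

Lemma num_lt : forall n f, num n f < 2 ^ n.
Proof.
  induction n; intros f; simpl. lia. specialize (IHn f). destruct (f n); lia.
Qed.

Lemma num_top : forall n f, f 0 = false -> num (S n) f < 2 ^ n.
Proof.
  induction n; intros f H0.
  - simpl. rewrite H0. lia.
  - change (num (S (S n)) f) with (2 * num (S n) f + (if f (S n) then 1 else 0)).
    specialize (IHn f H0). rewrite Nat.pow_succ_r'. destruct (f (S n)); lia.
Qed.

Lemma num_bits : forall n f j, j < n -> Nat.testbit (num n f) (n - 1 - j) = f j.
Proof.
  induction n; intros f j Hj. lia.
  change (num (S n) f) with (2 * num n f + (if f n then 1 else 0)). destruct (Nat.eq_dec j n) as [->|Hne].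
  - replace (S n - 1 - n) with 0 by lia.
    destruct (f n). apply Nat.testbit_odd_0. rewrite Nat.add_0_r. apply Nat.testbit_even_0.
  - replace (S n - 1 - j) with (S (n - 1 - j)) by lia.
    destruct (f n).
    + rewrite Nat.testbit_odd_succ'. apply IHn; lia.
    + rewrite Nat.add_0_r, Nat.testbit_even_succ'. apply IHn; lia.
Qed.

Lemma testbit_small : forall a k, a < 2 ^ k -> Nat.testbit a k = false.
Proof.
  intros a k H. destruct (Nat.eq_dec a 0) as [->|Ha]. apply Nat.bits_0.
  apply Nat.bits_above_log2. apply Nat.log2_lt_pow2; lia.
Qed.

Lemma num_wbit : forall n b, b < 2 ^ n -> num n (fun j => Nat.testbit b (n - 1 - j)) = b.
Proof.
  induction n; intros b Hb. simpl in *. lia.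
  change (num (S n) ?f) with (2 * num n f + (if f n then 1 else 0)).
  rewrite (num_ext n _ (fun j => Nat.testbit (Nat.div2 b) (n - 1 - j))).
  2:{ intros j Hj. rewrite Nat.testbit_div2. f_equal. lia. }
  rewrite IHn.
  2:{ rewrite Nat.div2_div. apply Nat.Div0.div_lt_upper_bound. simpl in Hb. lia. }
  replace (S n - 1 - n) with 0 by lia.
  rewrite (Nat.div2_odd b) at 3. rewrite Nat.bit0_odd. destruct (Nat.odd b); simpl; lia.
Qed.

Lemma flat_map_len : forall {A B} (f : A -> list B) l c,
  (forall x, In x l -> length (f x) = c) -> length (flat_map f l) = length l * c.
Proof.
  intros A B f l c H. induction l; simpl. reflexivity.
  rewrite length_app, H by (left; reflexivity). rewrite IHl by (intros; apply H; right; assumption). lia.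
Qed.

Lemma flat_map_nth : forall {B} (f : nat -> list B) n c k i dflt,
  (forall x, length (f x) = c) -> k < n -> i < c ->
  nth (k * c + i) (flat_map f (seq 0 n)) dflt = nth i (f k) dflt.
Proof.
  intros B f n c k i dflt Hc Hk Hi.
  replace n with (k + S (n - S k)) by lia.
  rewrite seq_app, flat_map_app. simpl.
  rewrite app_nth2; rewrite (flat_map_len f (seq 0 k) c) by auto; rewrite length_seq.
  - replace (k * c + i - k * c) with i by lia. rewrite app_nth1 by (rewrite Hc; lia). reflexivity.
  - lia.
Qed.

Lemma lam_block_len : forall k, length (lam_block k) = 2 ^ (2 ^ k) * 2 ^ k.
Proof.
  intros k. unfold lam_block. rewrite (flat_map_len _ _ (2 ^ k)).
  - rewrite length_seq. reflexivity.
  - intros. rewrite length_map, length_seq. reflexivity.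
Qed.

Lemma lam_block_nth : forall d k i, k < 2 ^ (2 ^ d) -> i < 2 ^ d ->
  nth (k * 2 ^ d + i) (lam_block d) false = Mw d k i.
Proof.
  intros d k i Hk Hi. unfold lam_block.
  rewrite (flat_map_nth _ _ (2 ^ d)); auto.
  - rewrite nth_indep with (d' := Mw d k 0) by (rewrite length_map, length_seq; auto).
    rewrite map_nth, seq_nth by auto. reflexivity.
  - intros. rewrite length_map, length_seq. reflexivity.
Qed.

Definition Pk (k : nat) : nat := length (flat_map lam_block (seq 0 k)).

Lemma Pk_S : forall k, Pk (S k) = Pk k + 2 ^ (2 ^ k) * 2 ^ k.
Proof.
  intros k. unfold Pk. rewrite seq_S, flat_map_app, length_app. simpl.
  rewrite app_nil_r, lam_block_len. reflexivity.
Qed.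

Lemma Pk_ge : forall k, k <= Pk k.
Proof.
  induction k. unfold Pk. simpl. lia.
  rewrite Pk_S. assert (1 <= 2 ^ (2 ^ k) * 2 ^ k).
  { assert (2 ^ (2^k) <> 0) by (apply Nat.pow_nonzero; lia).
    assert (2 ^ k <> 0) by (apply Nat.pow_nonzero; lia). nia. }
  lia.
Qed.

Lemma levin_digit_block : forall k r, r < 2 ^ (2 ^ k) * 2 ^ k ->
  levin_digit (Pk k + r) = nth r (lam_block k) false.
Proof.
  intros k r Hr. unfold levin_digit.
  pose proof (Pk_ge k).
  replace (S (Pk k + r)) with (k + S (Pk k + r - k)) by lia.
  rewrite seq_app, flat_map_app. simpl.
  rewrite app_nth2; fold (Pk k).
  - replace (Pk k + r - Pk k) with r by lia. apply app_nth1. rewrite lam_block_len. lia.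
  - lia.
Qed.

Lemma levin_digit_word : forall d k i, k < 2 ^ (2 ^ d) -> i < 2 ^ d ->
  levin_digit (Pk d + k * 2 ^ d + i) = Mw d k i.
Proof.
  intros d k i Hk Hi. rewrite <- Nat.add_assoc. rewrite levin_digit_block.
  - apply lam_block_nth; auto.
  - assert (k * 2^d + i < (k+1) * 2^d) by lia.
    assert ((k+1) * 2^d <= 2^(2^d) * 2^d) by (apply Nat.mul_le_mono_r; lia). lia.
Qed.

Lemma levin_zero : forall n, exists m, n <= m /\ levin_digit m = false.
Proof.
  intros n. exists (Pk n). split. apply Pk_ge.
  pose proof (levin_digit_word n 0 0) as H.
  rewrite Nat.mul_0_l, !Nat.add_0_r in H. rewrite H.
  - rewrite Mw_Mv. unfold Mv. rewrite (xs_ext _ _ (fun _ => false)). apply xs_false.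
    intros j _. unfold wbit. rewrite Nat.bits_0. apply Bool.andb_false_r.
  - apply Nat.neq_0_lt_0, Nat.pow_nonzero. lia.
  - apply Nat.neq_0_lt_0, Nat.pow_nonzero. lia.
Qed.

End Part2.
Import Part2.

Module Part3.
Import ListNotations.
Local Open Scope nat_scope.
Local Open Scope bool_scope.

Lemma Mw_double : forall d b i, b < 2 ^ (2 ^ d) -> i < 2 ^ d + 2 ^ d ->
  Mw (S d) b i = Mw d b (if i <? 2 ^ d then i else i - 2 ^ d).
Proof.
  intros d b i Hb Hi. rewrite !Mw_Mv. unfold Mv.
  assert (He : 2 ^ S d = 2 ^ d + 2 ^ d) by (simpl; lia).
  rewrite He. rewrite xs_add. set (e := 2 ^ d) in *.
  assert (W1 : forall j, j < e -> wbit (e + e) b j = false).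
  { intros j Hj. unfold wbit. apply testbit_small.
    apply Nat.lt_le_trans with (2 ^ e); auto. apply Nat.pow_le_mono_r; lia. }
  assert (W2 : forall j, j < e -> wbit (e + e) b (e + j) = wbit e b j).
  { intros j Hj. unfold wbit. f_equal. lia. }
  rewrite (xs_ext e (fun j => Mentry (S d) i j && wbit (e + e) b j) (fun _ => false))
    by (intros j Hj; rewrite W1 by auto; apply Bool.andb_false_r).
  rewrite xs_false. simpl xorb.
  apply xs_ext. intros j Hj. rewrite W2 by auto. f_equal.
  fold e. destruct (Nat.ltb_spec (e + j) e); [lia|].
  replace (e + j - e) with j by lia. destruct (Nat.ltb_spec i e); reflexivity.
Qed.

Lemma digit_square : forall d b t, b < 2 ^ (2 ^ d) -> t < 2 ^ d + 2 ^ d ->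
  levin_digit (Pk (S d) + b * (2 ^ d + 2 ^ d) + t) = Mw d b (t mod 2 ^ d).
Proof.
  intros d b t Hb Ht.
  assert (He : 2 ^ S d = 2 ^ d + 2 ^ d) by (simpl; lia).
  rewrite <- He. rewrite levin_digit_word.
  - rewrite Mw_double by (auto; lia). f_equal.
    assert (0 < 2 ^ d) by (apply Nat.neq_0_lt_0, Nat.pow_nonzero; lia).
    destruct (Nat.ltb_spec t (2 ^ d)).
    + symmetry. apply Nat.mod_small. auto.
    + replace t with ((t - 2 ^ d) + 1 * 2 ^ d) at 2 by lia.
      rewrite Nat.Div0.mod_add. symmetry. apply Nat.mod_small. lia.
  - apply Nat.lt_le_trans with (2 ^ (2 ^ d)); auto. apply Nat.pow_le_mono_r; lia.
  - lia.
Qed.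

Definition sig (d r b : nat) : nat :=
  num (2 ^ d) (Mv d (fun i => Mw d b ((i + r) mod 2 ^ d))).

Lemma sig_lt : forall d r b, sig d r b < 2 ^ (2 ^ d).
Proof. intros. apply num_lt. Qed.

Lemma wbit_num : forall e f j, j < e -> wbit e (num e f) j = f j.
Proof. intros. unfold wbit. apply num_bits. auto. Qed.

Lemma sig_spec : forall d r b i, i < 2 ^ d ->
  Mw d (sig d r b) i = Mw d b ((i + r) mod 2 ^ d).
Proof.
  intros d r b i Hi. rewrite Mw_Mv.
  rewrite (Mv_ext d _ (Mv d (fun i => Mw d b ((i + r) mod 2 ^ d)))).
  - rewrite Mv_inv by auto. reflexivity.
  - intros j Hj. unfold sig. apply wbit_num. auto.
Qed.

Lemma Mw_inv : forall d b j, j < 2 ^ d -> Mv d (Mw d b) j = wbit (2 ^ d) b j.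
Proof.
  intros. rewrite (Mv_ext d _ (Mv d (wbit (2 ^ d) b))) by (intros; apply Mw_Mv).
  apply Mv_inv. auto.
Qed.

Lemma sig_half : forall d r b, 1 <= d -> b < 2 ^ (2 ^ d - 1) -> sig d r b < 2 ^ (2 ^ d - 1).
Proof.
  intros d r b Hd Hb. unfold sig.
  assert (He : 2 ^ d = S (2 ^ d - 1)).
  { assert (2 ^ d <> 0) by (apply Nat.pow_nonzero; lia). lia. }
  assert (Hpos : 0 < 2 ^ d) by lia.
  rewrite He at 1. apply num_top.
  unfold Mv. rewrite (xs_ext _ _ (fun j => Mw d b ((j + r) mod 2 ^ d)))
    by (intros; rewrite Mentry_0; reflexivity).
  rewrite xs_rot by auto.
  transitivity (Mv d (Mw d b) 0).
  - unfold Mv. apply xs_ext. intros. rewrite Mentry_0. reflexivity.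
  - rewrite Mw_inv by auto. unfold wbit. rewrite Nat.sub_0_r. apply testbit_small. auto.
Qed.

Lemma sig_inj : forall d r b1 b2, b1 < 2 ^ (2 ^ d) -> b2 < 2 ^ (2 ^ d) ->
  sig d r b1 = sig d r b2 -> b1 = b2.
Proof.
  intros d r b1 b2 H1 H2 Heq.
  set (e := 2 ^ d) in *.
  assert (Hpos : 0 < e) by (unfold e; apply Nat.neq_0_lt_0, Nat.pow_nonzero; lia).
  assert (V : forall i, i < e -> Mw d b1 i = Mw d b2 i).
  { intros i Hi.
    set (i' := (i + (e - r mod e)) mod e).
    assert (Hi' : i' < e) by (apply Nat.mod_upper_bound; lia).
    assert (Hr : (i' + r) mod e = i).
    { unfold i'. rewrite Nat.Div0.add_mod_idemp_l.
      assert (r mod e < e) by (apply Nat.mod_upper_bound; lia).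
      rewrite (Nat.div_mod_eq r e) at 2.
      replace (i + (e - r mod e) + (e * (r / e) + r mod e)) with (i + (1 + r / e) * e) by nia.
      rewrite Nat.Div0.mod_add. apply Nat.mod_small. auto. }
    rewrite <- Hr. rewrite <- !sig_spec by auto. rewrite Heq. reflexivity. }
  rewrite <- (num_wbit e b1), <- (num_wbit e b2) by auto.
  apply num_ext. intros j Hj.
  change (Nat.testbit b1 (e - 1 - j)) with (wbit e b1 j).
  change (Nat.testbit b2 (e - 1 - j)) with (wbit e b2 j).
  unfold e. rewrite <- !Mw_inv by auto. apply Mv_ext. intros. apply V. auto.
Qed.

End Part3.
Import Part3.

Module Part4.
Import ListNotations.
Local Open Scope R_scope.

Definition dg (m : nat) : R := if levin_digit m then 1 else 0.

Fixpoint tsum (a L : nat) : R :=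
  match L with O => 0 | S L' => tsum a L' + levin_term (a + L') end.

Fixpoint dsum (a L : nat) : R :=
  match L with O => 0 | S L' => dsum a L' + dg (a + L') / 2 ^ (S L') end.

Lemma sum_tsum : forall K, sum_f_R0 levin_term K = tsum 0 (S K).
Proof.
  induction K. simpl. ring.
  simpl sum_f_R0. rewrite IHK. simpl. reflexivity.
Qed.

Lemma tsum_split : forall a L1 L2, tsum a (L1 + L2) = tsum a L1 + tsum (a + L1) L2.
Proof.
  intros a L1 L2. induction L2. simpl. rewrite Nat.add_0_r. ring.
  rewrite Nat.add_succ_r. simpl. rewrite IHL2. rewrite Nat.add_assoc. ring.
Qed.

Lemma pow2_pos : forall n, 0 < 2 ^ n.
Proof. intros. apply pow_lt. lra. Qed.

Lemma tsum_dsum : forall a L, 2 ^ a * tsum a L = dsum a L.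
Proof.
  intros a L. induction L. simpl. ring.
  simpl tsum. simpl dsum. rewrite <- IHL. unfold levin_term, dg.
  rewrite Rmult_plus_distr_l. f_equal.
  replace (S (a + L)) with (a + S L)%nat by lia. rewrite pow_add.
  pose proof (pow2_pos a). pose proof (pow2_pos L). simpl pow. destruct (levin_digit (a + L)); field; lra.
Qed.

Lemma tsum_int : forall a, exists k : nat, 2 ^ a * tsum 0 a = INR k.
Proof.
  induction a. exists 0%nat. simpl. ring.
  destruct IHa as [k Hk].
  exists (2 * k + (if levin_digit a then 1 else 0))%nat.
  simpl tsum. rewrite plus_INR, mult_INR. rewrite <- Hk. unfold levin_term.
  simpl pow. simpl INR. pose proof (pow2_pos a).
  destruct (levin_digit a); simpl INR; field; lra.
Qed.

Lemma dsum_bounds : forall a L, 0 <= dsum a L <= 1 - / 2 ^ L.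
Proof.
  intros a L. induction L. simpl. lra.
  simpl dsum. pose proof (pow2_pos L).
  assert (0 <= dg (a + L) <= 1) by (unfold dg; destruct levin_digit; lra).
  assert (/ 2 ^ S L = / 2 ^ L / 2) by (simpl; field; lra).
  assert (0 <= dg (a+L) / 2 ^ S L <= / 2 ^ S L).
  { split. apply Rmult_le_pos; [lra|]. left; apply Rinv_0_lt_compat, pow2_pos.
    unfold Rdiv. rewrite <- (Rmult_1_l (/ 2 ^ S L)) at 2. apply Rmult_le_compat_r; [|lra].
    left; apply Rinv_0_lt_compat, pow2_pos. }
  assert (0 < / 2 ^ L) by (apply Rinv_0_lt_compat; auto).
  assert (/ (2 * 2 ^ L) = / 2 ^ L / 2) by (field; lra).
  simpl pow in *. lra.
Qed.

Lemma dsum_zero : forall a L t0, (t0 < L)%nat -> levin_digit (a + t0) = false ->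
  dsum a L <= 1 - / 2 ^ L - / 2 ^ (S t0).
Proof.
  intros a L t0 Ht H0. induction L. lia.
  simpl dsum. pose proof (pow2_pos L).
  assert (/ 2 ^ S L = / 2 ^ L / 2) by (simpl; field; lra).
  assert (0 < / 2 ^ L) by (apply Rinv_0_lt_compat; auto).
  assert (dg (a+L) / 2 ^ S L <= / 2 ^ S L).
  { assert (0 < / 2 ^ S L) by (apply Rinv_0_lt_compat, pow2_pos).
    unfold dg; destruct (levin_digit (a + L)); unfold Rdiv; [rewrite Rmult_1_l | rewrite Rmult_0_l]; lra. }
  destruct (Nat.eq_dec t0 L) as [->|Hne].
  - unfold dg. rewrite H0. pose proof (dsum_bounds a L).
    assert (/ (2 * 2 ^ L) = / 2 ^ L / 2) by (field; lra). simpl pow in *. lra.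
  - assert (t0 < L)%nat by lia. specialize (IHL H4).
    assert (/ (2 * 2 ^ L) = / 2 ^ L / 2) by (field; lra). simpl pow in *. lra.
Qed.

Lemma dsum_eq : forall a b W, (forall t, (t < W)%nat -> levin_digit (a + t) = levin_digit (b + t)) ->
  dsum a W = dsum b W.
Proof.
  intros a b W H. induction W. reflexivity.
  simpl. rewrite IHW by (intros; apply H; lia). unfold dg. rewrite H by lia. reflexivity.
Qed.

Lemma dsum_split : forall a W L, dsum a (W + L) = dsum a W + dsum (a + W) L / 2 ^ W.
Proof.
  intros a W L. induction L. simpl. rewrite Nat.add_0_r. field. apply pow_nonzero. lra.
  rewrite Nat.add_succ_r. simpl dsum. rewrite IHL. rewrite Nat.add_assoc.
  replace (S (W + L)) with (W + S L)%nat by lia. rewrite pow_add.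
  pose proof (pow2_pos W). pose proof (pow2_pos L). simpl pow. field. split; lra.
Qed.

Lemma partial_decomp : forall n W L, exists k : nat,
  2 ^ n * tsum 0 (n + W + L) = INR k + dsum n W + dsum (n + W) L / 2 ^ W.
Proof.
  intros n W L. destruct (tsum_int n) as [k Hk]. exists k.
  rewrite <- Nat.add_assoc, tsum_split, Rmult_plus_distr_l, Hk. simpl (0 + n)%nat.
  rewrite tsum_dsum, dsum_split. ring.
Qed.

Lemma lim_le : forall (S : nat -> R) lam A c B K0,
  (forall eps, eps > 0 -> exists N, forall n, (n >= N)%nat -> R_dist (S n) lam < eps) ->
  (forall K, (K >= K0)%nat -> Rabs (A * S K - c) <= B) -> Rabs (A * lam - c) <= B.
Proof.
  intros S lam A c B K0 Hcv Hb.
  destruct (Rle_or_lt (Rabs (A * lam - c)) B) as [|Hlt]; auto. exfalso.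
  set (eps := (Rabs (A * lam - c) - B) / (Rabs A + 1)).
  assert (Ha : 0 <= Rabs A) by apply Rabs_pos.
  assert (He : eps > 0) by (unfold eps; apply Rdiv_lt_0_compat; lra).
  destruct (Hcv eps He) as [N HN].
  specialize (HN (Nat.max N K0) ltac:(lia)). specialize (Hb (Nat.max N K0) ltac:(lia)).
  unfold R_dist in HN. set (s := S (Nat.max N K0)) in *.
  assert (Rabs (A * lam - c) <= Rabs (A * s - c) + Rabs A * Rabs (s - lam)).
  { rewrite <- Rabs_mult.
    replace (A * lam - c) with ((A * s - c) - A * (s - lam)) by ring.
    eapply Rle_trans. apply Rabs_triang. rewrite Rabs_Ropp. lra. }
  assert (Rabs A * Rabs (s - lam) <= Rabs A * eps) by (apply Rmult_le_compat_l; lra).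
  assert (Rabs A * eps < Rabs (A * lam - c) - B).
  { unfold eps. apply Rlt_le_trans with ((Rabs A + 1) * ((Rabs (A * lam - c) - B) / (Rabs A + 1))).
    apply Rmult_lt_compat_r. apply Rdiv_lt_0_compat; lra. lra.
    right. field. lra. }
  lra.
Qed.

Lemma dist_int_near : forall (z : Z) r, Rabs r < 1 -> dist_int (IZR z + r) <= Rabs r.
Proof.
  intros z r Hr. unfold dist_int, fracR, frac_part, Int_part.
  destruct (Rle_or_lt 0 r) as [Hp|Hn].
  - rewrite Rabs_right in * by lra.
    assert (up (IZR z + r) = (z + 1)%Z).
    { symmetry. apply tech_up; rewrite plus_IZR; simpl; lra. }
    rewrite H, minus_IZR, plus_IZR. simpl.
    apply Rle_trans with (IZR z + r - (IZR z + 1 - 1)). apply Rmin_l. lra.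
  - rewrite Rabs_left in * by lra.
    assert (up (IZR z + r) = z).
    { symmetry. apply tech_up; lra. }
    rewrite H, minus_IZR. simpl.
    apply Rle_trans with (1 - (IZR z + r - (IZR z - 1))). apply Rmin_r. lra.
Qed.

Lemma close : forall lam, infinite_sum levin_term lam -> forall n1 n2 W,
  (forall t, (t < W)%nat -> levin_digit (n1 + t) = levin_digit (n2 + t)) ->
  dist_int (fracR (2 ^ n1 * lam) - fracR (2 ^ n2 * lam)) < / 2 ^ W.
Proof.
  intros lam Hlam n1 n2 W Hw.
  destruct (levin_zero (n1 + n2 + W)) as [m0 [Hm0 Hz]].
  set (delta := / 2 ^ S m0).
  assert (Hd : 0 < delta) by (apply Rinv_0_lt_compat, pow2_pos).
  destruct (partial_decomp n1 W 0) as [k1 _].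
  destruct (tsum_int n1) as [i1 Hi1]. destruct (tsum_int n2) as [i2 Hi2].
  assert (HW : 0 < 2 ^ W) by apply pow2_pos.
  assert (Tail : forall n K, (n <= n1 + n2)%nat -> (K >= m0)%nat ->
     exists T, 0 <= T <= 1 - delta /\
       2 ^ n * sum_f_R0 levin_term K = 2 ^ n * tsum 0 n + dsum n W + T / 2 ^ W).
  { intros n K Hn HK. rewrite sum_tsum.
    replace (S K) with (n + W + (S K - n - W))%nat by lia.
    rewrite <- Nat.add_assoc, tsum_split, Rmult_plus_distr_l. simpl (0 + n)%nat.
    rewrite tsum_dsum, dsum_split.
    exists (dsum (n + W) (S K - n - W)). split; [|ring].
    pose proof (dsum_bounds (n + W) (S K - n - W)).
    assert (dsum (n + W) (S K - n - W) <= 1 - / 2 ^ (S K - n - W) - / 2 ^ S (m0 - n - W)).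
    { apply dsum_zero. lia. replace (n + W + (m0 - n - W))%nat with m0 by lia. auto. }
    assert (delta <= / 2 ^ S (m0 - n - W)).
    { unfold delta. apply Rinv_le_contravar. apply pow2_pos. apply Rle_pow. lra. lia. }
    assert (0 < / 2 ^ (S K - n - W)) by (apply Rinv_0_lt_compat, pow2_pos).
    lra. }
  set (c := 2 ^ n1 * tsum 0 n1 - 2 ^ n2 * tsum 0 n2).
  assert (Hb : Rabs ((2 ^ n1 - 2 ^ n2) * lam - c) <= (1 - delta) / 2 ^ W).
  { apply lim_le with (S := sum_f_R0 levin_term) (K0 := m0). exact Hlam.
    intros K HK.
    destruct (Tail n1 K ltac:(lia) HK) as [T1 [HT1 E1]].
    destruct (Tail n2 K ltac:(lia) HK) as [T2 [HT2 E2]].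
    replace ((2 ^ n1 - 2 ^ n2) * sum_f_R0 levin_term K - c) with ((T1 - T2) / 2 ^ W).
    2:{ unfold c. rewrite Rmult_minus_distr_r, E1, E2. rewrite (dsum_eq n1 n2 W Hw). field. lra. }
    unfold Rdiv. rewrite Rabs_mult, Rabs_inv, (Rabs_right (2 ^ W)) by lra.
    apply Rmult_le_compat_r. left; apply Rinv_0_lt_compat; lra.
    apply Rabs_le. lra. }
  set (r := (2 ^ n1 - 2 ^ n2) * lam - c).
  assert (Hr : Rabs r < / 2 ^ W).
  { eapply Rle_lt_trans. apply Hb. unfold Rdiv. rewrite <- (Rmult_1_l (/ 2 ^ W)) at 2.
    apply Rmult_lt_compat_r. apply Rinv_0_lt_compat; lra. lra. }
  assert (Hr1 : Rabs r < 1).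
  { eapply Rlt_le_trans. apply Hr. rewrite <- Rinv_1. apply Rinv_le_contravar. lra.
    apply pow_R1_Rle. lra. }
  unfold fracR, frac_part.
  replace (2 ^ n1 * lam - IZR (Int_part (2 ^ n1 * lam)) - (2 ^ n2 * lam - IZR (Int_part (2 ^ n2 * lam))))
    with (IZR (Z.of_nat i1 - Z.of_nat i2 - Int_part (2 ^ n1 * lam) + Int_part (2 ^ n2 * lam)) + r).
  2:{ unfold r, c. rewrite Hi1, Hi2. rewrite plus_IZR, !minus_IZR, <- !INR_IZR_INZ. ring. }
  eapply Rle_lt_trans. apply dist_int_near. auto. auto.
Qed.

End Part4.
Import Part4.

Module Part5.
Import ListNotations.
Local Open Scope nat_scope.

Lemma NoDup_flat_map_disj : forall {A B} (f : A -> list B) l,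
  NoDup l -> (forall a, In a l -> NoDup (f a)) ->
  (forall a1 a2 x, In a1 l -> In a2 l -> In x (f a1) -> In x (f a2) -> a1 = a2) ->
  NoDup (flat_map f l).
Proof.
  intros A B f l Hl Hf Hd. induction l as [|a l IH]; simpl. constructor.
  inversion Hl; subst. apply NoDup_app.
  - apply Hf. left; auto.
  - apply IH; auto. intros; apply Hf; right; auto.
    intros a1 a2 x Ha1 Ha2 Hx1 Hx2. apply (Hd a1 a2 x); auto; right; auto.
  - intros x Hx Hx'. apply in_flat_map in Hx'. destruct Hx' as [a' [Ha' Hx']].
    assert (a = a') by (apply (Hd a a' x); auto; [left; auto| right; auto]).
    subst. contradiction.
Qed.

Lemma flat_map_len_ge : forall {A B} (f : A -> list B) l c,
  (forall x, In x l -> c <= length (f x)) -> length l * c <= length (flat_map f l).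
Proof.
  intros A B f l c H. induction l; simpl. lia.
  rewrite length_app. assert (c <= length (f a)) by (apply H; left; auto).
  assert (length l * c <= length (flat_map f l)) by (apply IHl; intros; apply H; right; auto).
  lia.
Qed.

Lemma NoDup_map_inj : forall {A B} (f : A -> B) l,
  (forall x y, f x = f y -> x = y) -> NoDup l -> NoDup (map f l).
Proof.
  intros. apply NoDup_map_NoDup_ForallPairs; auto. intros x y _ _. apply H.
Qed.

Lemma count_sig : forall d r B, 1 <= d -> B <= 2 ^ (2 ^ d - 1) ->
  B - (2 ^ (2 ^ d - 1) - B) <= length (filter (fun b => sig d r b <? B) (seq 0 B)).
Proof.
  intros d r B Hd HB. set (H := 2 ^ (2 ^ d - 1)) in *.
  pose proof (filter_length (fun b => sig d r b <? B) (seq 0 B)) as HL.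
  rewrite length_seq in HL.
  set (D := filter (fun x => negb (sig d r x <? B)) (seq 0 B)) in *.
  assert (length (map (sig d r) D) <= length (seq B (H - B))).
  { apply NoDup_incl_length.
    - apply NoDup_map_NoDup_ForallPairs.
      + intros x y Hx Hy Hxy. unfold D in Hx, Hy.
        apply filter_In in Hx, Hy. destruct Hx as [Hx _], Hy as [Hy _].
        apply in_seq in Hx, Hy.
        assert (H < 2 ^ (2 ^ d)) by (unfold H; apply Nat.pow_lt_mono_r; try lia;
          assert (2 ^ d <> 0) by (apply Nat.pow_nonzero; lia); lia).
        apply (sig_inj d r); auto; lia.
      + apply NoDup_filter, seq_NoDup.
    - intros y Hy. apply in_map_iff in Hy. destruct Hy as [x [<- Hx]].
      unfold D in Hx. apply filter_In in Hx. destruct Hx as [Hx Hn].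
      apply in_seq in Hx. apply in_seq.
      destruct (Nat.ltb_spec (sig d r x) B); [discriminate|].
      assert (sig d r x < H) by (apply sig_half; auto; lia). lia. }
  rewrite length_map, length_seq in H0. lia.
Qed.

Definition skip (s1 t : nat) : nat := if t <? s1 then t else S t.

Lemma Pk_bound : forall d1, Pk (S d1) <= 2 ^ (S d1) * 2 ^ (2 ^ d1).
Proof.
  induction d1.
  - rewrite Pk_S. unfold Pk. simpl. lia.
  - rewrite Pk_S. 
    assert (2 ^ (2 ^ d1) <= 2 ^ (2 ^ S d1)) by (apply Nat.pow_le_mono_r; simpl; lia).
    assert (2 ^ S (S d1) = 2 * 2 ^ S d1) by reflexivity.
    nia.
Qed.

Section Main.
Variable d : nat.
Hypothesis Hd : 1 <= d.
Let e := 2 ^ d.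
Let Q := 2 ^ (e - 2).
Let H := 2 ^ (e - 1).
Let B := 2 * Q - Q / 2.
Let m := e - d + 1.
Let N := 2 ^ (e + d + 1).
Definition pos (b s : nat) : nat := Pk (S d) + b * (2 ^ d + 2 ^ d) + s.

Lemma e_ge : d + 1 <= e /\ 2 <= e.
Proof.
  unfold e. split.
  - pose proof (Nat.pow_gt_lin_r 2 d ltac:(lia)). lia.
  - replace d with (S (d - 1)) by lia. simpl. assert (2 ^ (d-1) <> 0) by (apply Nat.pow_nonzero; lia). lia.
Qed.

Lemma HQ : H = 2 * Q.
Proof.
  unfold H, Q. destruct e_ge. replace (e - 1) with (S (e - 2)) by lia. reflexivity.
Qed.

Lemma pos_inj : forall b s b' s', s < e + e -> s' < e + e -> pos b s = pos b' s' -> b = b' /\ s = s'.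
Proof.
  intros b s b' s' Hs Hs' Heq. unfold pos in Heq. fold e in Heq.
  assert (b = b').
  { destruct (lt_eq_lt_dec b b') as [[Hlt|]|Hlt]; auto; exfalso.
    - assert ((b + 1) * (e + e) <= b' * (e + e)) by (apply Nat.mul_le_mono_r; lia). nia.
    - assert ((b' + 1) * (e + e) <= b * (e + e)) by (apply Nat.mul_le_mono_r; lia). nia. }
  subst. split; auto. lia.
Qed.

Lemma pos_bound : 1 <= B /\ Pk (S d) + (B - 1) * (2 ^ d + 2 ^ d) + (e - d) <= N.
Proof.
  destruct e_ge as [He1 He2].
  assert (E2e : 2 ^ e = 4 * Q).
  { unfold Q. replace e with (S (S (e - 2))) at 1 by lia. simpl. lia. }
  assert (EN : N = 8 * Q * e).
  { unfold N. rewrite !Nat.pow_add_r, E2e. fold e. simpl. lia. }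
  assert (EP : Pk (S d) = Pk d + 4 * Q * e).
  { rewrite Pk_S. fold e. rewrite E2e. lia. }
  assert (HQpos : 1 <= Q) by (unfold Q; apply Nat.neq_0_lt_0, Nat.pow_nonzero; lia).
  set (q2 := Q / 2).
  assert (Hq2 : 2 * q2 <= Q <= 2 * q2 + 1).
  { unfold q2. pose proof (Nat.div_mod Q 2 ltac:(lia)). pose proof (Nat.mod_upper_bound Q 2 ltac:(lia)). lia. }
  assert (HB : B = 2 * Q - q2) by reflexivity.
  assert (HPd : Pk d <= 2 * e * q2 + e + d).
  { destruct (Nat.eq_dec d 1) as [->|Hd1].
    - unfold e in *. simpl in *. unfold Pk. simpl. lia.
    - assert (Hdd : d = S (d - 1)) by lia.
      pose proof (Pk_bound (d - 1)) as Hb. rewrite <- Hdd in Hb. fold e in Hb.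
      assert (Hee : e = 2 * 2 ^ (d - 1)) by (unfold e; rewrite Hdd at 1; reflexivity).
      assert (2 <= 2 ^ (d - 1)).
      { replace (d - 1) with (S (d - 2)) by lia. simpl.
        assert (2 ^ (d-2) <> 0) by (apply Nat.pow_nonzero; lia). lia. }
      assert (2 ^ (2 ^ (d - 1)) <= Q).
      { unfold Q. apply Nat.pow_le_mono_r; lia. }
      assert (Pk d <= e * Q) by nia. nia. }
  split. lia.
  fold e. rewrite EN, EP, HB.
  assert ((2 * Q - q2 - 1) * (e + e) = 4 * Q * e - 2 * e * q2 - 2 * e).
  { assert (2 * Q - q2 - 1 + q2 + 1 = 2 * Q) by lia.
    assert ((2 * Q - q2 - 1) * (e + e) + q2 * (e + e) + (e + e) = 2 * Q * (e + e)) by nia.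
    nia. }
  nia.
Qed.

Lemma window : forall b1 s1 s2 t, b1 < H -> s1 <= e - d -> s2 <= e - d -> t < e + d ->
  levin_digit (pos b1 s1 + t) = levin_digit (pos (sig d (s1 + e - s2) b1) s2 + t).
Proof.
  intros b1 s1 s2 t Hb Hs1 Hs2 Ht. destruct e_ge as [He1 He2].
  assert (HH : H < 2 ^ (2 ^ d)) by (unfold H; apply Nat.pow_lt_mono_r; fold e; lia).
  unfold pos. rewrite <- !Nat.add_assoc.
  rewrite !Nat.add_assoc with (n := Pk (S d)).
  rewrite !digit_square; fold e; try lia; try apply sig_lt.
  rewrite sig_spec by (apply Nat.mod_upper_bound; lia). fold e.
  f_equal. rewrite Nat.Div0.add_mod_idemp_l.
  replace (s2 + t + (s1 + e - s2)) with (s1 + t + 1 * e) by lia.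
  symmetry. apply Nat.Div0.mod_add.
all: unfold e in *; lia.
Qed.

Definition plist : list (nat * nat) :=
  flat_map (fun s1 => flat_map (fun t =>
     map (fun b => (pos b s1, pos (sig d (s1 + e - skip s1 t) b) (skip s1 t)))
         (filter (fun b => sig d (s1 + e - skip s1 t) b <? B) (seq 0 B)))
     (seq 0 (m - 1))) (seq 0 m).

Lemma plist_len : m * (m - 1) * Q <= length plist.
Proof.
  destruct e_ge as [He1 He2].
  assert (HBH : B <= 2 ^ (2 ^ d - 1)) by (fold e; fold H; rewrite HQ; unfold B; lia).
  assert (Hc : forall r, Q <= length (filter (fun b => sig d r b <? B) (seq 0 B))).
  { intros r. pose proof (count_sig d r B Hd HBH). fold e in H0. fold H in H0. rewrite HQ in H0.
    assert (2 * (Q / 2) <= Q) by (apply Nat.mul_div_le; lia). assert (B = 2 * Q - Q / 2) by reflexivity. lia. }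
  unfold plist. rewrite <- Nat.mul_assoc.
  replace m with (length (seq 0 m)) at 1 by apply length_seq.
  apply flat_map_len_ge. intros s1 _.
  replace (m - 1) with (length (seq 0 (m - 1))) at 1 by apply length_seq.
  apply flat_map_len_ge. intros t _. rewrite length_map. apply Hc.
Qed.

Lemma skip_lt : forall s1 t, s1 < m -> t < m - 1 -> skip s1 t < m /\ skip s1 t <> s1.
Proof. intros. unfold skip. destruct (Nat.ltb_spec t s1); lia. Qed.

Lemma skip_inj : forall s1 t t', skip s1 t = skip s1 t' -> t = t'.
Proof. intros. unfold skip in H0. destruct (Nat.ltb_spec t s1), (Nat.ltb_spec t' s1); lia. Qed.

Lemma plist_NoDup : NoDup plist.
Proof.
  destruct e_ge as [He1 He2].
  unfold plist. apply NoDup_flat_map_disj.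
  - apply seq_NoDup.
  - intros s1 Hs1. apply in_seq in Hs1. apply NoDup_flat_map_disj.
    + apply seq_NoDup.
    + intros t Ht. apply NoDup_map_inj.
      * intros b b' Heq. apply (f_equal fst) in Heq; cbn [fst] in Heq. apply pos_inj in Heq; try lia; tauto.
      * apply NoDup_filter, seq_NoDup.
    + intros t1 t2 x Ht1 Ht2 Hx1 Hx2. apply in_seq in Ht1, Ht2.
      apply in_map_iff in Hx1, Hx2. destruct Hx1 as [b1 [<- _]]. destruct Hx2 as [b2 [Hx _]].
      apply (f_equal snd) in Hx; cbn [snd] in Hx.
      pose proof (skip_lt s1 t1 ltac:(lia) ltac:(lia)). pose proof (skip_lt s1 t2 ltac:(lia) ltac:(lia)).
      apply pos_inj in Hx; try lia. destruct Hx as [_ Hx]. apply skip_inj in Hx. auto.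
  - intros a1 a2 x Ha1 Ha2 Hx1 Hx2. apply in_seq in Ha1, Ha2.
    apply in_flat_map in Hx1, Hx2. destruct Hx1 as [t1 [_ Hx1]]. destruct Hx2 as [t2 [_ Hx2]].
    apply in_map_iff in Hx1, Hx2. destruct Hx1 as [b1 [<- _]]. destruct Hx2 as [b2 [Hx _]].
    apply (f_equal fst) in Hx; cbn [fst] in Hx. apply pos_inj in Hx; try lia.
Qed.

End Main.

End Part5.
Import Part5.

Module Part6.
Import ListNotations.
Local Open Scope nat_scope.

Lemma INR_pow2 : forall k, INR (2 ^ k) = (2 ^ k)%R.
Proof. intros. rewrite pow_INR. f_equal. Qed.

Lemma count_bound : forall lam, infinite_sum levin_term lam -> forall d, 1 <= d ->
  (2 ^ d - d + 1) * (2 ^ d - d) * 2 ^ (2 ^ d - 2) <=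
  pair_count (fun n => fracR (2 ^ n * lam)) (2 ^ (2 ^ d + d + 1)) 2.
Proof.
  intros lam Hlam d Hd.
  pose proof (plist_len d Hd) as HL.
  replace (2 ^ d - d + 1 - 1) with (2 ^ d - d) in HL by lia.
  eapply Nat.le_trans. apply HL. unfold pair_count.
  apply NoDup_incl_length. apply plist_NoDup; auto.
  destruct (e_ge d Hd) as [He1 He2].
  destruct (pos_bound d Hd) as [HB1 HPB].
  pose proof (HQ d Hd) as HHQ.
  set (e := 2 ^ d) in *. set (Q := 2 ^ (e - 2)) in *. set (B := 2 * Q - Q / 2) in *.
  set (N := 2 ^ (e + d + 1)) in *.
  assert (HBH : B <= 2 ^ (e - 1)) by (rewrite HHQ; unfold B; lia).
  intros [n1 n2] Hx. unfold plist in Hx. fold e in Hx. fold Q B in Hx.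
  apply in_flat_map in Hx. destruct Hx as [s1 [Hs1 Hx]].
  apply in_flat_map in Hx. destruct Hx as [t [Ht Hx]].
  apply in_map_iff in Hx. destruct Hx as [b [Heq Hb]].
  apply filter_In in Hb. destruct Hb as [Hb Hsb]. apply in_seq in Hb, Hs1, Ht.
  apply Nat.ltb_lt in Hsb.
  destruct (skip_lt d Hd s1 t ltac:(fold e; lia) ltac:(fold e; lia)) as [Hs2 Hne].
  fold e in Hs2.
  set (s2 := skip s1 t) in *. set (b2 := sig d (s1 + e - s2) b) in *.
  injection Heq as E1 E2.
  assert (Hpos : forall bb ss, bb < B -> ss <= e - d -> 1 <= pos d bb ss <= N).
  { intros bb ss Hbb Hss. unfold pos. fold e. split.
    - pose proof (Pk_ge (S d)). lia.
    - assert (bb * (e + e) <= (B - 1) * (e + e)) by (apply Nat.mul_le_mono_r; lia). lia. }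
  apply filter_In. split.
  - apply in_prod; apply in_seq.
    + rewrite <- E1. pose proof (Hpos b s1 ltac:(lia) ltac:(lia)). lia.
    + rewrite <- E2. pose proof (Hpos b2 s2 ltac:(lia) ltac:(lia)). lia.
  - rewrite <- E1, <- E2. apply andb_true_intro. split.
    + apply Bool.negb_true_iff. apply Nat.eqb_neq. intros Hp.
      apply pos_inj in Hp; auto; fold e; try lia.
    + destruct Rlt_dec as [|Hn]; auto. exfalso. apply Hn.
      assert (Hc := close lam Hlam (pos d b s1) (pos d b2 s2) (e + d)).
      assert (Hw : forall tt, tt < e + d -> levin_digit (pos d b s1 + tt) = levin_digit (pos d b2 s2 + tt)).
      { intros tt Htt. unfold b2. apply window; auto; fold e; lia. }
      specialize (Hc Hw).
      replace (2 / INR N)%R with (/ 2 ^ (e + d))%R. exact Hc.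
      unfold N. rewrite INR_pow2. rewrite (pow_add 2 (e + d) 1). simpl (2 ^ 1)%R.
      assert (0 < 2 ^ (e + d))%R by (apply pow_lt; lra). field. lra.
Qed.

Lemma pow_lin16 : forall d, 7 <= d -> 16 * d <= 2 ^ d.
Proof.
  induction d; intros H. lia.
  destruct (Nat.eq_dec d 6) as [->|Hn]. simpl. lia.
  specialize (IHd ltac:(lia)). simpl. lia.
Qed.


Lemma main_aux (lam : R) (Hlam : infinite_sum levin_term lam) :
  let x := fun n : nat => fracR (2 ^ n * lam) in
  (forall d : nat, (1 <= d)%nat ->
     let e := (2 ^ d)%nat in
     F_pc x (2 ^ (e + d + 1))%nat 2 >=
       (INR e - INR d + 1) * (INR e - INR d) / (8 * INR e))%R
  /\ ~ poissonian_pc x.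
Proof.
  intros x.
  assert (Main : forall d : nat, (1 <= d)%nat ->
     (F_pc x (2 ^ (2 ^ d + d + 1))%nat 2 >=
       (INR (2 ^ d) - INR d + 1) * (INR (2 ^ d) - INR d) / (8 * INR (2 ^ d)))%R).
  { intros d Hd. unfold F_pc.
    pose proof (count_bound lam Hlam d Hd) as Hc. fold x in Hc.
    destruct (e_ge d Hd) as [He1 He2].
    set (e := 2 ^ d) in *. set (Q := 2 ^ (e - 2)) in *.
    assert (HN : 2 ^ (e + d + 1) = Q * e * 8).
    { unfold Q. rewrite !Nat.pow_add_r. fold e.
      replace e with (S (S (e - 2))) at 1 by lia. simpl. lia. }
    rewrite HN.
    apply le_INR in Hc. rewrite !mult_INR in Hc. rewrite !mult_INR.
    rewrite minus_INR in Hc by lia. rewrite plus_INR, minus_INR in Hc by lia.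
    assert (HQ0 : (0 < INR Q)%R) by (apply lt_0_INR; unfold Q; apply Nat.neq_0_lt_0, Nat.pow_nonzero; lia).
    assert (He0 : (2 <= INR e)%R) by (apply (le_INR 2) in He2; simpl in He2; lra).
    assert (Hde : (INR d + 1 <= INR e)%R) by (apply le_INR in He1; rewrite plus_INR in He1; simpl in He1; lra).
    simpl (INR 8) .
    apply Rle_ge.
    apply Rle_trans with (/ (INR Q * INR e * (INR 8)) *
        ((INR e - INR d + INR 1) * (INR e - INR d) * INR Q))%R.
    - simpl INR. right. field. lra.
    - apply Rmult_le_compat_l. left. apply Rinv_0_lt_compat. simpl INR. nra. rewrite <- HN. exact Hc. }
  split.
  - intros d Hd. cbv zeta. apply Main. auto.
  - intros Hp. specialize (Hp 2%R ltac:(lra)).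
    destruct (Hp 1%R ltac:(lra)) as [N0 HN0].
    set (d := (N0 + 7)%nat).
    assert (Hd : (1 <= d)%nat) by (unfold d; lia).
    specialize (Main d Hd).
    assert (HNN : (2 ^ (2 ^ d + d + 1) >= N0)%nat).
    { pose proof (Nat.pow_gt_lin_r 2 (2 ^ d + d + 1) ltac:(lia)). unfold d in *. lia. }
    specialize (HN0 _ HNN). unfold R_dist in HN0.
    apply Rabs_def2 in HN0. destruct HN0 as [HN0 _].
    pose proof (pow_lin16 d ltac:(unfold d; lia)) as H16.
    apply le_INR in H16. rewrite mult_INR in H16. simpl (INR 16) in H16.
    assert (H128 : (128 <= INR (2 ^ d))%R).
    { assert (2 ^ 7 <= 2 ^ d)%nat by (apply Nat.pow_le_mono_r; unfold d; lia).
      apply le_INR in H. simpl in H. lra. }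
    set (E := INR (2 ^ d)) in *. set (D := INR d) in *.
    assert (HD0 : (0 <= D)%R) by apply pos_INR.
    assert ((E - D + 1) * (E - D) / (8 * E) >= 5)%R.
    { apply Rle_ge. apply Rmult_le_reg_r with (8 * E)%R. lra.
      unfold Rdiv. rewrite Rmult_assoc, Rinv_l by lra. nra. }
    lra.
Qed.

End Part6.
Import Part6.

Theorem mainTheorem8 (lam : R) (Hlam : infinite_sum levin_term lam) :
  let x := fun n : nat => fracR (2 ^ n * lam) in
  (forall d : nat, (1 <= d)%nat ->
     let e := (2 ^ d)%nat in
     F_pc x (2 ^ (e + d + 1))%nat 2 >=
       (INR e - INR d + 1) * (INR e - INR d) / (8 * INR e))
  /\ ~ poissonian_pc x.
Proof.
  exact (main_aux lam Hlam).
Qed.
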